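(* Let $S$ be a species tree, $(T,\sigma)$ a gene tree, and $\mu:V(T)\to V(S)\cup E(S)$ a reconciliation map without horizontal gene transfer (satisfying (R0), (R1), (R2), (R3.i), (R3.ii)) that in addition satisfies axiom (R4). Let $A\subseteq L(T)$ with $|\sigma(A)|\geq 2$. If $\operatorname{lca}_S(\sigma(A))\prec_S\mu(\operatorname{lca}_T(A))$, then $\operatorname{lca}_T(A)$ is a duplication event, i.e., $\mu(\operatorname{lca}_T(A))\in E(S)$.
   Context: A planted phylogenetic tree $T$ has a distinguished leaf $0_T$ (the planted root) whose unique neighbour $\rho_T$ is the root; every other non-leaf vertex has at least two children. $L(T)$ denotes the leaves other than $0_T$. For vertices, $a\preceq_T b$ means $b$ lies on the path from $a$ to $0_T$; $\operatorname{lca}_T(A)$ is the $\preceq_T$-minimal vertex that is $\succeq_T$ every element of $A$. A species tree $S$ is a planted phylogenetic tree with planted root $0_S$, root $\rho_S$ and leaf set $\mathscr{S}$ (the species); $V^0(S)$ denotes the inner vertices of $S$ (neither leaves nor $0_S$). The order $\preceq_S$ is extended to $V(S)\cup E(S)$ by regarding each edge $e=pq$ ($q$ a child of $p$) as lying strictly between $q$ and $p$: $q\prec_S e\prec_S p$, a vertex $w$ satisfies $w\prec_S e$ iff $w\preceq_S q$ and $e\prec_S w$ iff $p\preceq_S w$, and for edges $e=pq,e'=p'q'$, $e\prec_S e'$ iff $p\preceq_S q'$; $\operatorname{lca}_S$ of elements of $V(S)\cup E(S)$ is the $\preceq_S$-minimal vertex above all of them. A gene tree $(T,\sigma)$ is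 a planted phylogenetic tree with $\sigma:L(T)\to\mathscr{S}$. A reconciliation map without horizontal gene transfer is $\mu:V(T)\to V(S)\cup E(S)$ with: (R0) $\mu(v)=0_S$ iff $v=0_T$; (R1) $\mu(v)=\sigma(v)$ for $v\in L(T)$; (R2) $v\prec_T w\Rightarrow\mu(v)\preceq_S\mu(w)$; and for each $v$ with $\mu(v)\in V^0(S)$: (R3.i) $\mu(v)=\operatorname{lca}_S(\mu(v'),\mu(v''))$ for at least two distinct children $v',v''$ of $v$; (R3.ii) $\mu(v'),\mu(v'')$ are $\preceq_S$-incomparable for any two distinct children $v',v''$ of $v$. Axiom (R4): for leaves $x,y,z$ of $T$, if $\mu(\operatorname{lca}_T(x,y))=\mu(\operatorname{lca}_T(x,z))\in V^0(S)$ then $\operatorname{lca}_S(\sigma(x),\sigma(y))=\operatorname{lca}_S(\sigma(x),\sigma(z))$. A vertex $v$ of $T$ is a duplication if $\mu(v)\in E(S)$. *)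

(* Defs.v *)
From mathcomp Require Import all_boot.
Set Implicit Arguments. Unset Strict Implicit. Unset Printing Implicit Defensive.

(* A rooted tree on a finite vertex set, given by a parent map.
   [root0] is the planted root 0_T; by convention [par root0 = root0].
   Every vertex reaches root0 by iterating [par] (acyclicity / connectivity).
   The edges are exactly the pairs {par w, w} with w <> root0. *)
Record ptree := PTree {
  pt_V :> finType;
  root0 : pt_V;
  par : pt_V -> pt_V;
  par_root0 : par root0 = root0;
  par_reach : forall v, exists k, iter k par v = root0
}.

Definition child (T : ptree) (v w : T) : Prop := w <> root0 T /\ par w = v.

Definition is_leaf (T : ptree) (v : T) : Prop :=
  v <> root0 T /\ forall w, ~ child v w.

Definition planted_phylo (T : ptree) : Prop :=
  (exists! r, child (root0 T) r) /\
  (forall v : T, v <> root0 T -> (exists w, child v w) ->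
     exists w1 w2, w1 <> w2 /\ child v w1 /\ child v w2).

Definition anc (T : ptree) (a b : T) : Prop := exists k, iter k (@par T) a = b.
Definition sanc (T : ptree) (a b : T) : Prop := anc a b /\ a <> b.

Definition upper (T : ptree) (A : T -> Prop) (v : T) : Prop :=
  forall a, A a -> anc a v.
Definition is_lca (T : ptree) (A : T -> Prop) (v : T) : Prop :=
  upper A v /\ forall u, upper A u -> anc u v -> u = v.

(* Elements of V(S) u E(S); an edge pq (q child of p) is represented by
   its lower endpoint q (any vertex other than 0_S). *)
Inductive selt (S : ptree) : Type :=
| SV : S -> selt S
| SE : {q : S | q != root0 S} -> selt S.

Definition sle (S : ptree) (x y : selt S) : Prop :=
  match x, y with
  | SV a, SV b => anc a b
  | SV a, SE e => anc a (val e)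
  | SE e, SV b => anc (par (val e)) b
  | SE e, SE e' => e = e' \/ anc (par (val e)) (val e')
  end.
Definition slt (S : ptree) (x y : selt S) : Prop := sle x y /\ x <> y.
Definition incomparable (S : ptree) (x y : selt S) : Prop :=
  ~ sle x y /\ ~ sle y x.

Definition supper (S : ptree) (P : selt S -> Prop) (w : S) : Prop :=
  forall x, P x -> sle x (SV w).
Definition is_lcaS (S : ptree) (P : selt S -> Prop) (w : S) : Prop :=
  supper P w /\ forall w', supper P w' -> anc w' w -> w' = w.

Definition inner (S : ptree) (w : S) : Prop := w <> root0 S /\ ~ is_leaf w.

Definition reconciliation (T S : ptree) (sigma : T -> S) (mu : T -> selt S)
  : Prop :=
  (forall v, mu v = SV (root0 S) <-> v = root0 T) /\
  (forall v, is_leaf v -> mu v = SV (sigma v)) /\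
  (forall v w, sanc v w -> sle (mu v) (mu w)) /\
  (forall v x, mu v = SV x -> inner x ->
      (exists v1 v2, child v v1 /\ child v v2 /\ v1 <> v2 /\
                 is_lcaS (fun y => y = mu v1 \/ y = mu v2) x) /\
      (forall v1 v2, child v v1 -> child v v2 -> v1 <> v2 ->
                 incomparable (mu v1) (mu v2))).

Definition axiomR4 (T S : ptree) (sigma : T -> S) (mu : T -> selt S) : Prop :=
  forall x y z : T, is_leaf x -> is_leaf y -> is_leaf z ->
  forall a b, is_lca (fun u => u = x \/ u = y) a ->
              is_lca (fun u => u = x \/ u = z) b ->
  mu a = mu b -> (exists w, mu a = SV w /\ inner w) ->
  forall c d, is_lcaS (fun s => s = SV (sigma x) \/ s = SV (sigma y)) c ->
              is_lcaS (fun s => s = SV (sigma x) \/ s = SV (sigma z)) d ->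
  c = d.

(* Main.v *)
Require Import Defs.
From mathcomp Require Import all_boot.
From Stdlib Require Import Classical ClassicalDescription.

Section Tree.
Variable T : ptree.
Implicit Types u v w : T.

Lemma iter_root0 n : iter n (@par T) (root0 T) = root0 T.
Proof. elim: n => //= n ->; exact: par_root0. Qed.

Lemma anc_refl v : anc v v. Proof. by exists 0. Qed.
Lemma anc_trans u v w : anc u v -> anc v w -> anc u w.
Proof. move=> [i Hi] [j Hj]; exists (j + i); by rewrite iterD Hi Hj. Qed.
Arguments anc_trans {u v w}.
Lemma anc_par v : anc v ((@par T) v). Proof. by exists 1. Qed.
Lemma anc_root v : anc v (root0 T). Proof. exact: par_reach. Qed.

Lemma cycle_root v n : 0 < n -> iter n (@par T) v = v -> v = root0 T.
Proof.
move=> n0 Hc; have [m Hm] := par_reach v.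
have E : forall k, iter (k * n) (@par T) v = v.
  elim=> [|k IH] //=; by rewrite mulSn iterD IH Hc.
have le : m <= m * n by rewrite leq_pmulr.
by rewrite -(E m) -(subnK le) iterD Hm iter_root0.
Qed.
Arguments cycle_root {v n}.

Lemma anc_antisym u v : anc u v -> anc v u -> u = v.
Proof.
move=> [i Hi] [j Hj].
case: (posnP (j + i)) => [/eqP|pos].
  rewrite addn_eq0 => /andP[/eqP j0 /eqP i0]; by rewrite -Hi i0.
have : iter (j + i) (@par T) u = u by rewrite iterD Hi Hj.
move=> H; have ur := @cycle_root u _ pos H.
by rewrite -Hi ur iter_root0.
Qed.
Arguments anc_antisym {u v}.

Lemma anc_chain u v w : anc u v -> anc u w -> anc v w \/ anc w v.
Proof.
move=> [i <-] [j <-]; case: (leqP i j) => h.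
  left; exists (j - i); by rewrite -iterD subnK.
right; exists (i - j); rewrite -iterD subnK //; exact: ltnW.
Qed.
Arguments anc_chain {u v w}.

Lemma anc_step u v : anc u v -> u <> v -> anc ((@par T) u) v.
Proof. move=> [[|k] Hk] ne; first by case: ne. by exists k; rewrite -iterSr. Qed.
Arguments anc_step {u v}.

Lemma par_neq v : v <> root0 T -> (@par T) v <> v.
Proof. move=> nr E; apply: nr; apply: (@cycle_root v 1) => //. Qed.
Arguments par_neq {v}.

Lemma anc_child_of u v : anc u v -> u <> v -> exists c, child v c /\ anc u c.
Proof.
move=> [k Hk]; elim: k v Hk => [|k IH] v Hk ne; first by case: ne.
set c := iter k (@par T) u.
case: (classic (c = v)) => cv; first exact: IH cv ne.
exists c; split; last by exists k.
split; last by rewrite -Hk iterS.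
move=> cr; apply: cv; by rewrite -Hk iterS -/c cr par_root0.
Qed.
Arguments anc_child_of {u v}.

Definition pb (P : Prop) : bool :=
  if excluded_middle_informative P then true else false.
Lemma pbP P : reflect P (pb P).
Proof. rewrite /pb; case: excluded_middle_informative => h; by constructor. Qed.

Lemma exists_min (P : T -> Prop) u0 : P u0 ->
  exists u, P u /\ forall u', P u' -> anc u' u -> u' = u.
Proof.
move=> P0.
have P0' : (fun u => pb (P u)) u0 by apply/pbP.
case: (@arg_maxnP _ u0 (fun u => pb (P u)) (fun u => #|[set w | pb (anc u w)]|) P0') => u /pbP Pu Hmax.
exists u; split=> // u' Pu' au.
case: (classic (u' = u)) => // ne; exfalso.
have lt : #|[set w | pb (anc u w)]| < #|[set w | pb (anc u' w)]|.
  apply: proper_card; apply/properP; split.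
    apply/subsetP => x; rewrite !inE => /pbP h; apply/pbP; exact: anc_trans au h.
  exists u'; rewrite !inE; first by apply/pbP; exact: anc_refl.
  apply/negP => /pbP h; apply: ne; exact: (anc_antisym au h).
have := Hmax u' (introT (pbP _) Pu').
by rewrite /= leqNgt lt.
Qed.

Lemma leaf_below v : v <> root0 T -> exists z, is_leaf z /\ anc z v.
Proof.
move=> vr.
have [u [[uv ur] umin]] := @exists_min (fun u => anc u v /\ u <> root0 T) v (conj (anc_refl v) vr).
exists u; split=> //; split=> // c [cr pc].
have cu : anc c u by rewrite -pc; exact: anc_par.
have E := umin c (conj (anc_trans cu uv) cr) cu.
apply: (par_neq ur); by rewrite -{2}pc E.
Qed.
Arguments leaf_below {v}.

Lemma lca2_exists p q : exists c, anc p c /\ anc q c /\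
  forall u, anc p u -> anc q u -> anc u c -> u = c.
Proof.
have [c [[pc qc] cmin]] := @exists_min (fun u => anc p u /\ anc q u) (root0 T)
   (conj (anc_root p) (anc_root q)).
exists c; split=> //; split=> // u pu qu; exact: cmin.
Qed.

Lemma lca_two a c p q : child a c -> anc p c -> anc q a -> ~ anc q c ->
  is_lca (fun u => u = p \/ u = q) a.
Proof.
move=> [cr pc] pC qa nqc.
have ca : anc c a by rewrite -pc; exact: anc_par.
split; first by move=> z [->|->] //; exact: anc_trans pC ca.
move=> u up ua.
have pu := up p (or_introl erefl); have qu := up q (or_intror erefl).
case: (anc_chain pC pu) => [cu|uc]; last by case: nqc; exact: anc_trans qu uc.
case: (classic (c = u)) => [E|ne]; first by case: nqc; rewrite E.
have := anc_step cu ne; rewrite pc => au; exact: anc_antisym ua au.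
Qed.
Arguments lca_two {a c p q}.

Lemma children_disjoint (a c1 c2 z : T) : child a c1 -> child a c2 -> c1 <> c2 ->
  anc z c1 -> ~ anc z c2.
Proof.
move=> [c1r p1] [c2r p2] ne z1 z2.
have c1a : anc c1 a by rewrite -p1; exact: anc_par.
have c2a : anc c2 a by rewrite -p2; exact: anc_par.
case: (anc_chain z1 z2) => h.
  have := anc_step h ne; rewrite p1 => ac2.
  have E := anc_antisym ac2 c2a. apply: (par_neq c2r); by rewrite p2.
have := anc_step h (fun E => ne (esym E)); rewrite p2 => ac1.
have E := anc_antisym ac1 c1a. apply: (par_neq c1r); by rewrite p1.
Qed.
Arguments children_disjoint {a c1 c2 z}.

End Tree.
Arguments par_neq {T v}.
Arguments leaf_below {T v}.
Arguments lca_two {T a c p q}.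
Arguments children_disjoint {T a c1 c2 z}.
Arguments anc_trans {T u v w}.
Arguments cycle_root {T v n}.
Arguments anc_antisym {T u v}.
Arguments anc_chain {T u v w}.
Arguments anc_step {T u v}.
Arguments anc_child_of {T u v}.

Section Selt.
Variable S : ptree.
Implicit Types X Y : selt S.

Definition lo X : S := match X with SV a => a | SE e => val e end.
Definition hi X : S := match X with SV a => a | SE e => @par S (val e) end.

Lemma sleE X Y : sle X Y <-> X = Y \/ anc (hi X) (lo Y).
Proof.
case: X => [a|e]; case: Y => [b|e'] /=; split.
- by right.
- by case=> // [[<-]]; exact: anc_refl.
- by right.
- by case.
- by right.
- by case.
- by case=> [->|h]; [left | right].
- by case=> [[->]|h]; [left | right].
Qed.

Lemma lo_hi X : anc (lo X) (hi X).
Proof. case: X => [a|e] /=; [exact: anc_refl | exact: anc_par]. Qed.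

Lemma sle_refl X : sle X X. Proof. by apply/sleE; left. Qed.

Lemma sle_trans X Y Z : sle X Y -> sle Y Z -> sle X Z.
Proof.
move=> /sleE [->//|h1] /sleE [<-|h2]; apply/sleE; right=> //.
exact: anc_trans h1 (anc_trans (lo_hi Y) h2).
Qed.
Arguments sle_trans {X Y Z}.

Lemma sle_SVl a X : sle (SV a) X <-> anc a (lo X). Proof. by case: X. Qed.
Lemma sle_SVr X b : sle X (SV b) <-> anc (hi X) b. Proof. by case: X. Qed.

Lemma hi_anc X v : anc (lo X) v -> lo X <> v -> anc (hi X) v.
Proof. case: X => [a|e] /= h ne //; exact: anc_step h ne. Qed.
Arguments hi_anc {X v}.

Lemma lo_anc X Y : anc (lo X) (lo Y) -> sle X Y \/ sle Y X.
Proof.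
move=> h; case: (classic (lo X = lo Y)) => E; last first.
  by left; apply/sleE; right; apply: hi_anc.
case: X E {h} => [a|e]; case: Y => [b|e'] /= E.
- by left; rewrite /= E; exact: anc_refl.
- by left; rewrite /= E; exact: anc_refl.
- by right; rewrite /= E; exact: anc_refl.
- by left; left; apply: val_inj.
Qed.
Arguments lo_anc {X Y}.

Lemma compC u X Y : sle (SV u) X -> sle (SV u) Y -> sle X Y \/ sle Y X.
Proof.
move=> /sle_SVl h1 /sle_SVl h2; case: (anc_chain h1 h2) => h.
  exact: lo_anc.
by case: (lo_anc h) => ?; [right|left].
Qed.
Arguments compC {u X Y}.

Lemma compC' p u X : sle (SV p) X -> anc p u -> sle X (SV u) \/ sle (SV u) X.
Proof.
move=> /sle_SVl h1 h2; case: (anc_chain h1 h2) => h.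
  case: (classic (lo X = u)) => E.
    case: X h1 h E => [a|e] /= _ _ E; first by left; rewrite E; exact: anc_refl.
    by right; rewrite /= E; exact: anc_refl.
  by left; apply/sle_SVr; apply: hi_anc.
by right; apply/sle_SVl.
Qed.
Arguments compC' {p u X}.

Lemma lcaS_least (P : selt S -> Prop) c X u :
  is_lcaS P c -> P X -> supper P u -> anc c u.
Proof.
move=> [cup cmin] PX uup.
have h1 : anc (lo X) c by apply: anc_trans (lo_hi X) _; apply/sle_SVr; exact: cup.
have h2 : anc (lo X) u by apply: anc_trans (lo_hi X) _; apply/sle_SVr; exact: uup.
case: (anc_chain h1 h2) => // h.
rewrite (cmin u uup h); exact: anc_refl.
Qed.
Arguments lcaS_least {P c X u}.

Lemma keyF X Y w p r u : is_lcaS (fun y => y = X \/ y = Y) w -> incomparable X Y ->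
  sle (SV p) X -> sle (SV r) Y -> anc p u -> anc r u -> anc w u.
Proof.
move=> Hw [i1 i2] pX rY pu ru.
case: (compC' pX pu) => [Xu|uX]; case: (compC' rY ru) => [Yu|uY].
- apply: (lcaS_least (X := X)) Hw _ _; first by left.
  by move=> z [->|->].
- by case: i1; apply: sle_trans Xu uY.
- by case: i2; apply: sle_trans Yu uX.
- by case: (compC uX uY).
Qed.
Arguments keyF {X Y w p r u}.

Lemma lcaS_ex (p q : S) : exists c, is_lcaS (fun s => s = SV p \/ s = SV q) c.
Proof.
have [c [pc [qc cmin]]] := @lca2_exists S p q.
exists c; split; first by move=> z [->|->].
move=> w' up wc; apply: cmin => //.
- exact: (up (SV p) (or_introl erefl)).
- exact: (up (SV q) (or_intror erefl)).
Qed.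

Lemma lcaS_up (p q c : S) : is_lcaS (fun s => s = SV p \/ s = SV q) c -> anc p c /\ anc q c.
Proof.
move=> [H _]; split; [exact: (H (SV p) (or_introl erefl)) | exact: (H (SV q) (or_intror erefl))].
Qed.
Arguments lcaS_up {p q c}.

End Selt.
Arguments sle_trans {S X Y Z}.
Arguments hi_anc {S X v}.
Arguments lo_anc {S X Y}.
Arguments compC {S u X Y}.
Arguments compC' {S p u X}.
Arguments lcaS_least {S P c X u}.
Arguments keyF {S X Y w p r u}.
Arguments lcaS_up {S p q c}.

Theorem corollary1 (S T : ptree) (sigma : T -> S) (mu : T -> selt S) :
  planted_phylo S -> planted_phylo T ->
  (forall v : T, is_leaf v -> is_leaf (sigma v)) ->
  reconciliation sigma mu -> axiomR4 sigma mu ->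
  forall A : {set T}, (forall v, v \in A -> is_leaf v) ->
  2 <= #|sigma @: A| ->
  forall a : T, is_lca (fun u => u \in A) a ->
  forall s : S, is_lcaS (fun x => exists2 u, u \in A & x = SV (sigma u)) s ->
  slt (SV s) (mu a) ->
  exists e, mu a = SE e.
Proof.
move=> phS phT leafs [R0 [R1 [R2 R3]]] R4 A Aleaf cardA a [aup amin] s [sup smin] [sle_sa neq_sa].
case Ema: (mu a) => [w|e]; last by exists e.
exfalso.
rewrite Ema in sle_sa neq_sa.
have sw : anc s w := sle_sa.
have snw : s <> w by move=> E; apply: neq_sa; rewrite E.
have wnl : ~ is_leaf w.
  move=> [_ H]; have [c [cc _]] := anc_child_of sw snw; exact: H c cc.
have [x0 x0A] : exists x0, x0 \in A.
  case: (set_0Vmem A) => [A0|[x0 ?]]; last by exists x0.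
  by move: cardA; rewrite A0 imset0 cards0.
have x0a : anc x0 a := aup x0 x0A.
have x0na : x0 <> a.
  move=> E; apply: wnl.
  have := R1 _ (Aleaf _ x0A); rewrite E Ema => [[->]].
  by rewrite -E; apply: leafs; apply: Aleaf.
have [a1 [[a1r pa1] x0a1]] := anc_child_of x0a x0na.
have ca1 : child a a1 by [].
have a1a : anc a1 a by rewrite -pa1; exact: anc_par.
have a1na : a1 <> a by move=> E; apply: (par_neq a1r); rewrite pa1 E.
have [y [yA ya1]] : exists y, y \in A /\ ~ anc y a1.
  apply: NNPP => H; apply: a1na; apply: amin a1a => v vA.
  apply: NNPP => nv; apply: H; by exists v.
have ar : a <> root0 T.
  move=> E.
  have yl := Aleaf _ yA.
  have [c [cc yc]] := anc_child_of (@anc_root T y) (proj1 yl).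
  have [[r [rc runiq]] _] := phT.
  have e1 := runiq c cc.
  have e2 : r = a1 by apply: runiq; split=> //; rewrite pa1 E.
  by apply: ya1; rewrite -e2 e1.
have wr : w <> root0 S.
  move=> E; apply: ar; apply/R0; by rewrite Ema E.
have winner : inner w := conj wr wnl.
have [[v1 [v2 [cv1 [cv2 [v12 lcaw]]]]] inc] := R3 a w Ema winner.
have inc12 := inc v1 v2 cv1 cv2 v12.
have [z1 [z1l z1v]] := leaf_below (proj1 cv1).
have [z2 [z2l z2v]] := leaf_below (proj1 cv2).
have below : forall z v, is_leaf z -> anc z v -> sle (SV (sigma z)) (mu v).
  move=> z v zl zv; rewrite -(R1 _ zl); case: (classic (z = v)) => [<-|ne].
    exact: sle_refl.
  by apply: R2; split.
have canc : forall v, child a v -> anc v a.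
  by move=> v [_ <-]; exact: anc_par.
have [cxy Hcxy] := @lcaS_ex S (sigma x0) (sigma y).
have cs : anc cxy s.
  apply: (lcaS_least (X := SV (sigma x0))) Hcxy _ _; first by left.
  by move=> X [->|->]; apply: sup; [exists x0 | exists y].
have lxy : is_lca (fun u => u = x0 \/ u = y) a := lca_two ca1 x0a1 (aup y yA) ya1.
have hR4 : forall z, is_leaf z -> ~ anc z a1 -> anc z a -> anc (sigma z) cxy.
  move=> z zl za1 za.
  have [d Hd] := @lcaS_ex S (sigma x0) (sigma z).
  have lxz := lca_two ca1 x0a1 za za1.
  have E : cxy = d.
    apply: (R4 x0 y z (Aleaf _ x0A) (Aleaf _ yA) zl a a lxy lxz erefl _ cxy d Hcxy Hd).
    by exists w; rewrite Ema.
  rewrite E; exact: (lcaS_up Hd).2.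
have x0c : anc (sigma x0) cxy := (lcaS_up Hcxy).1.
have [p [r [pv1 [rv2 [pc rc]]]]] : exists p r, sle (SV p) (mu v1) /\ sle (SV r) (mu v2)
    /\ anc p cxy /\ anc r cxy.
  case: (classic (v1 = a1)) => e1.
    have nz2 : ~ anc z2 a1.
      apply: (children_disjoint cv2 ca1) => // E; apply: v12; by rewrite e1 E.
    exists (sigma x0), (sigma z2); split; first by apply: below; [apply: Aleaf | rewrite e1].
    split; first exact: below.
    split=> //; apply: hR4 => //; exact: anc_trans z2v (canc _ cv2).
  have nz1 : ~ anc z1 a1 by apply: (children_disjoint cv1 ca1).
  have z1c : anc (sigma z1) cxy by apply: hR4 => //; exact: anc_trans z1v (canc _ cv1).
  case: (classic (v2 = a1)) => e2.
    exists (sigma z1), (sigma x0); split; first exact: below.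
    split; first by apply: below; [apply: Aleaf | rewrite e2].
    by [].
  have nz2 : ~ anc z2 a1 by apply: (children_disjoint cv2 ca1).
  exists (sigma z1), (sigma z2); split; first exact: below.
  split; first exact: below.
  split=> //; apply: hR4 => //; exact: anc_trans z2v (canc _ cv2).
have wc := keyF lcaw inc12 pv1 rv2 pc rc.
apply: snw; apply: anc_antisym sw (anc_trans wc cs).
Qed.
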